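(* Let $(S,K,I)$ be an active split graph such that $\Phi=\Phi(S)$ is simple and connected. Then exactly one of the following holds: (1) $\Phi$ is complete and $|K|=|I|$; (2) $|K|=\omega(\Phi)<|I|$, and every vertex of $\Phi$ belongs to some maximum clique of $\Phi$; in particular $|K|\le 1+\min\{\deg_{\Phi}(v): v\in I\}$.
   Context: All graphs are finite and simple. A split graph is a graph $S$ whose vertex set is a disjoint union $V(S)=K\,\dot\cup\,I$ with $K$ a clique and $I$ an independent set; $(K,I)$ is called a bipartition of $S$, and $(S,K,I)$ denotes $S$ together with this fixed bipartition. A 2-switch in a graph $G$ is performed on four distinct vertices $a,b,c,d$ with $ab,cd\in E(G)$ and $ac,bd\notin E(G)$: it deletes $ab,cd$ and adds $ac,bd$; $a,b,c,d$ are said to participate in it. A vertex is active in $G$ if it participates in some 2-switch on $G$; $G$ is active if all its vertices are active. For a split graph $(S,K,I)$ and distinct $u,v\in I$, $\sigma_{uv}(S)$ is the number of induced subgraphs of $S$ isomorphic to $P_4$ containing both $u$ and $v$. The factor graph $\Phi(S)$ is the loopless multigraph with vertex set $I$ having exactly $\sigma_{uv}(S)$ parallel edges between $u$ and $v$; it is simple if $\sigma_{uv}(S)\in\{0,1\}$ for all $u,v$. Graph notions (connected, complete, clique, clique number $\omega(\Phi)$, degree $\deg_\Phi$, etc.) applied to $\Phi(S)$ refer to its underlying simple graph, in which $u\sim v$ iff $\sigma_{uv}(S)\ge1$. *)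

(* Defs.v *)
From mathcomp Require Import all_boot.
Set Implicit Arguments. Unset Strict Implicit. Unset Printing Implicit Defensive.

Section Defs.
Variables (T : finType) (e : rel T).

Definition simple_graph : Prop := symmetric e /\ irreflexive e.

Definition split_bipartition (K I : {set T}) : Prop :=
  [/\ K :&: I = set0, K :|: I = [set: T],
      (forall x y, x \in K -> y \in K -> x != y -> e x y) &
      (forall x y, x \in I -> y \in I -> ~~ e x y)].

Definition two_switch (a b c d : T) : bool :=
  [&& uniq [:: a; b; c; d], e a b, e c d, ~~ e a c & ~~ e b d].

Definition active_vertex (v : T) : Prop :=
  exists a b c d, two_switch a b c d /\ v \in [:: a; b; c; d].

Definition active_graph : Prop := forall v : T, active_vertex v.

Definition induced_P4 (X : {set T}) : bool :=
  [exists a, exists b, exists c, exists d,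
    [&& uniq [:: a; b; c; d], X == [set a; b; c; d],
        e a b, e b c, e c d, ~~ e a c, ~~ e b d & ~~ e a d]].

Definition sigma (u v : T) : nat :=
  #|[set X : {set T} | [&& u \in X, v \in X & induced_P4 X]]|.

Section Factor.
Variable I : {set T}.

(* underlying simple graph of the factor graph Phi(S) on vertex set I *)
Definition phi_adj (u v : T) : bool :=
  [&& u \in I, v \in I, u != v & 0 < sigma u v].

Definition phi_simple : Prop :=
  forall u v, u \in I -> v \in I -> u != v -> sigma u v <= 1.

Definition phi_connected : Prop :=
  forall u v, u \in I -> v \in I -> connect phi_adj u v.

Definition phi_complete : Prop :=
  forall u v, u \in I -> v \in I -> u != v -> phi_adj u v.

Definition phi_clique (C : {set T}) : bool :=
  (C \subset I) && [forall u in C, forall v in C, (u != v) ==> phi_adj u v].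

Definition phi_omega : nat := \max_(C : {set T} | phi_clique C) #|C|.

Definition phi_max_clique (C : {set T}) : bool :=
  phi_clique C && (#|C| == phi_omega).

Definition phi_deg (v : T) : nat := #|[set w | phi_adj v w]|.
End Factor.
End Defs.

(* Main.v *)
Require Import Defs.
From mathcomp Require Import all_boot.
Set Implicit Arguments. Unset Strict Implicit. Unset Printing Implicit Defensive.

Lemma final (T : finType) (e : rel T) (K I : {set T}) (g : T -> T) :
  (forall u v, u \in I -> v \in I -> phi_adj e I u v = (g u != g v)) ->
  (forall u, u \in I -> g u \in K) ->
  (forall x, x \in K -> exists2 u, u \in I & g u = x) ->
  let P1 := phi_complete e I /\ #|K| = #|I| in
  let P2 := [/\ #|K| = phi_omega e I, #|K| < #|I|,
               (forall v, v \in I -> exists C, phi_max_clique e I C /\ v \in C) &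
               (forall v, v \in I -> #|K| <= 1 + phi_deg e I v)] in
  (P1 /\ ~ P2) \/ (~ P1 /\ P2).
Proof.
move=> Hg HgK Hs P1 P2.
have adjI : forall u v, phi_adj e I u v -> (u \in I) && (v \in I).
  by move=> u v /and4P [-> -> _ _].
pose pre x := odflt x [pick u in I | g u == x].
have preP : forall x, x \in K -> pre x \in I /\ g (pre x) = x.
  move=> x xK; rewrite /pre; case: pickP => [u /andP [uI /eqP gu]|] //=.
  by have [u uI gu] := Hs x xK => /(_ u); rewrite uI gu eqxx.
have cl_le : forall C, phi_clique e I C -> #|C| <= #|K|.
  move=> C /andP [CI /forall_inP HC].
  have inj : {in C &, injective g}.
    move=> u v uC vC guv; apply/eqP; apply/negPn/negP => uv.
    have := HC u uC; move/forall_inP/(_ v vC); rewrite uv /=.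
    by rewrite Hg ?guv ?eqxx //; [apply: (subsetP CI) | apply: (subsetP CI)].
  rewrite -(card_in_imset inj); apply: subset_leq_card; apply/subsetP => y.
  by case/imsetP => u uC ->; apply: HgK; apply: (subsetP CI).
have mkcl : forall v, v \in I -> exists C, [/\ phi_clique e I C, #|C| = #|K| & v \in C].
  move=> v vI; pose h x := if x == g v then v else pre x.
  have hP : forall x, x \in K -> h x \in I /\ g (h x) = x.
    move=> x xK; rewrite /h; case: eqP => [->|_]; first by [].
    exact: preP.
  exists (h @: K); split.
  - apply/andP; split.
      by apply/subsetP => y /imsetP [x xK ->]; case: (hP x xK).
    apply/forall_inP => u /imsetP [x xK ->]; apply/forall_inP => w /imsetP [y yK ->].
    apply/implyP => hxy; have [hxI gx] := hP x xK; have [hyI gy] := hP y yK.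
    rewrite Hg // gx gy; apply: contraNneq hxy => ->; done.
  - apply: card_in_imset => x y xK yK hxy.
    by have [_ <-] := hP x xK; have [_ <-] := hP y yK; rewrite hxy.
  - have gvK := HgK v vI.
    by apply/imsetP; exists (g v) => //; rewrite /h eqxx.
have omegaE : phi_omega e I = #|K|.
  apply/eqP; rewrite eqn_leq; apply/andP; split.
    by apply/bigmax_leqP => C; apply: cl_le.
  case: (set_0Vmem K) => [->|[x xK]]; first by rewrite cards0.
  have [vI _] := preP x xK.
  have [C [Ccl CK _]] := mkcl _ vI.
  by rewrite -CK /phi_omega; apply: (@leq_bigmax_cond _ (fun C => phi_clique e I C) (fun C => #|C|) C Ccl).
have gIK : g @: I \subset K by apply/subsetP => y /imsetP [u uI ->]; apply: HgK.
have KgI : K \subset g @: I.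
  by apply/subsetP => x xK; have [u uI <-] := Hs x xK; apply: imset_f.
have KleI : #|K| <= #|I|.
  by apply: (leq_trans (subset_leq_card KgI)); apply: leq_imset_card.
rewrite /P1 /P2.
have [KI|KI] := eqVneq #|K| #|I|.
  left; split; last by case => _; rewrite KI ltnn.
  split => // u v uI vI uv; rewrite Hg //.
  have inj : {in I &, injective g}.
    apply/imset_injP; rewrite eqn_leq leq_imset_card /= -KI.
    exact: subset_leq_card.
  by apply: contra uv => /eqP /inj; move=> /(_ uI vI) ->.
right; split; first by case => _ E; rewrite E eqxx in KI.
split.
- by rewrite omegaE.
- by rewrite ltn_neqAle KI KleI.
- move=> v vI; have [C [Ccl CK vC]] := mkcl v vI.
  by exists C; rewrite /phi_max_clique Ccl omegaE CK eqxx.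
- move=> v vI; rewrite (cardsD1 (g v) K) HgK // add1n ltnS /phi_deg.
  pose S := [set pre x | x in K :\ g v].
  have : #|S| = #|K :\ g v|.
    apply: card_in_imset => x y; rewrite !inE => /andP [_ xK] /andP [_ yK] E.
    by have [_ <-] := preP x xK; have [_ <-] := preP y yK; rewrite E.
  move <-; apply: subset_leq_card; apply/subsetP => w /imsetP [x].
  rewrite !inE => /andP [xv xK] ->; have [pI gp] := preP x xK.
  by rewrite Hg // gp eq_sym.
Qed.

Section Main.
Variables (T : finType) (e : rel T) (K I : {set T}).
Hypothesis Hsym : symmetric e.
Hypothesis Hirr : irreflexive e.
Hypothesis HKI0 : K :&: I = set0.
Hypothesis HKIT : K :|: I = [set: T].
Hypothesis HK : forall x y, x \in K -> y \in K -> x != y -> e x y.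
Hypothesis HI : forall x y, x \in I -> y \in I -> ~~ e x y.

Lemma KorI x : (x \in K) || (x \in I).
Proof. by rewrite -in_setU HKIT inE. Qed.

Lemma notKI x : x \in K -> x \in I -> False.
Proof. move=> a b; have : x \in K :&: I by rewrite inE a b.
by rewrite HKI0 inE. Qed.

Lemma KI_neq x y : x \in K -> y \in I -> x != y.
Proof. by move=> a b; apply/eqP => E; subst; apply: (notKI a b). Qed.

Definition N u := [set x | e u x].

Lemma N_K u x : u \in I -> x \in N u -> x \in K.
Proof.
move=> uI; rewrite inE => ux; case/orP: (KorI x) => // xI.
by move: (HI uI xI); rewrite ux.
Qed.

Lemma N_subK u : u \in I -> N u \subset K.
Proof. by move=> uI; apply/subsetP => x; apply: N_K. Qed.

Lemma p4_mk u v x y : u \in I -> v \in I -> u != v ->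
  x \in N u :\: N v -> y \in N v :\: N u -> induced_P4 e [set u; x; y; v].
Proof.
move=> uI vI uv; rewrite !inE => /andP [xv xu] /andP [yu yv].
have xK : x \in K by apply: (N_K uI); rewrite inE.
have yK : y \in K by apply: (N_K vI); rewrite inE.
have xy : x != y by apply/eqP => E; subst; rewrite yv in xv.
apply/existsP; exists u; apply/existsP; exists x; apply/existsP; exists y;
  apply/existsP; exists v.
rewrite /= !inE !negb_or xy uv (eq_sym u x) (KI_neq xK uI) (eq_sym u y) (KI_neq yK uI)
  (KI_neq xK vI) (KI_neq yK vI) eqxx xu (HK xK yK xy) (Hsym y v) yv.
by rewrite yu (Hsym x v) xv (HI uI vI).
Qed.

Lemma sigma_sym u v : sigma e u v = sigma e v u.
Proof. by apply: eq_card => X; rewrite !inE andbCA. Qed.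

Lemma sig_pos u v x y : u \in I -> v \in I -> u != v ->
  x \in N u :\: N v -> y \in N v :\: N u -> 0 < sigma e u v.
Proof.
move=> uI vI uv hx hy; apply/card_gt0P; exists [set u; x; y; v].
by rewrite inE p4_mk // !inE !eqxx /= orbT.
Qed.

Lemma sig2 u v x x' y : u \in I -> v \in I -> u != v ->
  x \in N u :\: N v -> x' \in N u :\: N v -> x != x' -> y \in N v :\: N u ->
  1 < sigma e u v.
Proof.
move=> uI vI uv hx hx' xx' hy.
have xK : x \in K by apply: (N_K uI); by move: hx; rewrite inE => /andP [_ ->].
have yK : y \in K by apply: (N_K vI); by move: hy; rewrite inE => /andP [_ ->].
have xy : x != y by apply/eqP => E; subst; move: hx hy; rewrite !inE => /andP[h1 _] /andP[_ h2]; rewrite h2 in h1.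
have neq : [set u; x; y; v] != [set u; x'; y; v].
  apply/eqP => E.
  have : x \in [set u; x'; y; v] by rewrite -E !inE eqxx orbT.
  by rewrite !inE (negbTE xx') (negbTE xy) (negbTE (KI_neq xK vI)) !orbF (negbTE (KI_neq xK uI)).
have : #|[set [set u; x; y; v]; [set u; x'; y; v]]| <= sigma e u v.
  apply: subset_leq_card; apply/subsetP => X; rewrite !inE => /orP [] /eqP ->;
  by rewrite inE p4_mk // !inE !eqxx /= ?orbT.
by rewrite cards2 neq.
Qed.

Lemma sig_inv u v : u \in I -> v \in I -> u != v -> 0 < sigma e u v ->
  exists x y, x \in N u :\: N v /\ y \in N v :\: N u.
Proof.
move=> uI vI uv /card_gt0P [X]; rewrite inE => /and3P [uX vX].
case/existsP => a /existsP [b] /existsP [c] /existsP [d].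
case/and5P => Hu /eqP XE ab bc /and4P [cd ac bd ad].
have nac : a != c by apply/eqP=> E; move: Hu; rewrite E /= !inE !eqxx /= !orbT.
have nbd : b != d by apply/eqP=> E; move: Hu; rewrite E /= !inE !eqxx /= !orbT andbF.
have bK : b \in K.
  case/orP: (KorI b) => // bI.
  have aK : a \in K by case/orP: (KorI a) => // aI; move: (HI aI bI); rewrite ab.
  have cK : c \in K by case/orP: (KorI c) => // cI; move: (HI bI cI); rewrite bc.
  by move: (HK aK cK nac); rewrite (negbTE ac).
have cK : c \in K.
  case/orP: (KorI c) => // cI.
  have dK : d \in K by case/orP: (KorI d) => // dI; move: (HI cI dI); rewrite cd.
  by move: (HK bK dK nbd); rewrite (negbTE bd).
have aI : a \in I.
  case/orP: (KorI a) => // aK.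
  by move: (HK aK cK nac); rewrite (negbTE ac).
have dI : d \in I.
  case/orP: (KorI d) => // dK.
  by move: (HK bK dK nbd); rewrite (negbTE bd).
have hu : (u == a) || (u == d).
  move: uX; rewrite XE !inE -!orbA => /or4P [] /eqP E; rewrite E ?eqxx ?orbT // in uI *.
  - by case: (notKI bK uI).
  - by case: (notKI cK uI).
have hv : (v == a) || (v == d).
  move: vX; rewrite XE !inE -!orbA => /or4P [] /eqP E; rewrite E ?eqxx ?orbT // in vI *.
  - by case: (notKI bK vI).
  - by case: (notKI cK vI).
case/orP: hu => /eqP Eu; case/orP: hv => /eqP Ev; rewrite Eu Ev in uv *.
- by rewrite eqxx in uv.
- exists b, c; rewrite !inE ab (Hsym d c) cd (Hsym d b) (negbTE bd) /=. by rewrite ac.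
- exists c, b; rewrite !inE ab (Hsym d c) cd (Hsym d b) (negbTE bd) /=. by rewrite ac.
- by rewrite eqxx in uv.
Qed.

Hypothesis Hsimp : phi_simple e I.

Lemma diff_le1 u v : u \in I -> v \in I -> u != v ->
  0 < #|N v :\: N u| -> #|N u :\: N v| <= 1.
Proof.
move=> uI vI uv /card_gt0P [y hy]; rewrite leqNgt; apply/negP => /card_gt1P [x [x' [hx hx' xx']]].
by move: (sig2 uI vI uv hx hx' xx' hy); rewrite ltnNge Hsimp.
Qed.

Lemma card_split u v : #|N u| = #|N u :&: N v| + #|N u :\: N v|.
Proof. by rewrite cardsID. Qed.

Lemma adj_diff u v : u \in I -> v \in I -> u != v -> 0 < sigma e u v ->
  #|N u :\: N v| = 1 /\ #|N v :\: N u| = 1.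
Proof.
move=> uI vI uv sp; have [x [y [hx hy]]] := sig_inv uI vI uv sp.
have h1 : 0 < #|N u :\: N v| by apply/card_gt0P; exists x.
have h2 : 0 < #|N v :\: N u| by apply/card_gt0P; exists y.
have vu : v != u by rewrite eq_sym.
have := diff_le1 uI vI uv h2; have := diff_le1 vI uI vu h1.
by case: #|N u :\: N v| h1 => [|[|]] //; case: #|N v :\: N u| h2 => [|[|]].
Qed.

Lemma adj_card u v : phi_adj e I u v -> #|N u| = #|N v|.
Proof.
case/and4P => uI vI uv sp; have [h1 h2] := adj_diff uI vI uv sp.
by rewrite (card_split u v) (card_split v u) h1 h2 setIC.
Qed.

Lemma conn_card u v : connect (phi_adj e I) u v -> #|N u| = #|N v|.
Proof.
case/connectP => p; elim: p u => [|w p IH] u /=; first by move=> _ ->.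
by case/andP => /adj_card -> /IH.
Qed.

Lemma swap_same (A P Q : {set T}) a b b' c :
  P :\: A = [set b'] -> A :\: P = [set a] -> Q :\: A = [set b] -> A :\: Q = [set c] ->
  b != b' -> #|P :\: Q| <= 1 -> a = c.
Proof.
move=> hP1 hP2 hQ1 hQ2 bb' hc.
have : b' \in P :\: A by rewrite hP1 inE.
rewrite inE => /andP [b'A b'P].
have b'Q : b' \notin Q.
  apply/negP => b'Q; have : b' \in Q :\: A by rewrite inE b'A b'Q.
  by rewrite hQ1 inE eq_sym (negbTE bb').
apply/eqP; apply/negPn/negP => ac.
have : c \in A :\: Q by rewrite hQ2 inE.
rewrite inE => /andP [cQ cA].
have cP : c \in P.
  apply/negPn/negP => cP; have : c \in A :\: P by rewrite inE cA cP.
  by rewrite hP2 inE eq_sym (negbTE ac).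
have : 1 < #|P :\: Q|.
  apply/card_gt1P; exists b', c; rewrite !inE b'Q b'P cQ cP; split => //.
  by apply/eqP => E; rewrite E cA in b'A.
by rewrite ltnNge hc.
Qed.

Hypothesis Hconn : phi_connected e I.

Lemma eqcard u v : u \in I -> v \in I -> #|N u| = #|N v|.
Proof. by move=> uI vI; apply: conn_card; apply: Hconn. Qed.

Lemma neq_sig u v : u \in I -> v \in I -> N u != N v -> 0 < sigma e u v.
Proof.
move=> uI vI nuv.
have uv : u != v by apply: contraNneq nuv => ->.
have h : #|N u :\: N v| = #|N v :\: N u|.
  by apply/eqP; rewrite -(eqn_add2l #|N u :&: N v|) -card_split setIC -card_split (eqcard uI vI).
have : 0 < #|N u :\: N v|.
  rewrite lt0n; apply: contraNneq nuv => h0; rewrite eqEcard (eqcard uI vI) leqnn andbT.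
  by rewrite -setD_eq0 -cards_eq0 h0.
case/card_gt0P => x hx; have : 0 < #|N v :\: N u| by rewrite -h; apply/card_gt0P; exists x.
case/card_gt0P => y hy.
by apply: (sig_pos uI vI uv hx hy).
Qed.

Lemma diffN_le1 u v : u \in I -> v \in I -> #|N u :\: N v| <= 1.
Proof.
move=> uI vI; have [E|nuv] := eqVneq (N u) (N v).
  by rewrite E setDv cards0.
have uv : u != v by apply: contraNneq nuv => ->.
by have [-> _] := adj_diff uI vI uv (neq_sig uI vI nuv).
Qed.

Lemma diffN_1 u v : u \in I -> v \in I -> N u != N v -> exists b, N u :\: N v = [set b].
Proof.
move=> uI vI nuv; have uv : u != v by apply: contraNneq nuv => ->.
by have [/eqP /cards1P h _] := adj_diff uI vI uv (neq_sig uI vI nuv).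
Qed.

Lemma johnson u0 :
  (forall x, x \in K -> exists2 u, u \in I & x \in N u) ->
  (forall x, x \in K -> exists2 u, u \in I & x \notin N u) ->
  (forall u, u \in I -> exists x, x \in N u) ->
  u0 \in I -> #|N u0| = 1 \/ #|K :\: N u0| = 1.
Proof.
move=> Hc1 Hc2 Hnb u0I; set A := N u0.
have split2 : forall v, v \in I -> N v != A ->
    (exists b, N v :\: A = [set b]) /\ (exists a, A :\: N v = [set a]).
  move=> v vI nvA; split; first exact: diffN_1.
  by apply: diffN_1; rewrite // eq_sym.
have [hA|hA] := leqP #|A| 1.
  left; apply/eqP; rewrite eqn_leq hA /=; have [x hx] := Hnb _ u0I.
  by apply/card_gt0P; exists x.
have [x [y [xA yA xy]]] := card_gt1P hA.
have AK : forall z, z \in A -> z \in K by move=> z; apply: N_K.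
have [hKA|hKA] := leqP #|K :\: A| 1.
  right; apply/eqP; rewrite eqn_leq hKA /=.
  have [v vI xv] := Hc2 x (AK x xA).
  have nvA : N v != A by apply: contraNneq xv => ->.
  have [[b hb] _] := split2 v vI nvA.
  have : b \in N v :\: A by rewrite hb inE.
  rewrite inE => /andP [bA bv]; apply/card_gt0P; exists b.
  by rewrite inE bA (N_K vI bv).
have [b1 [b2 [b1KA b2KA b12]]] := card_gt1P hKA.
have getv : forall b, b \in K :\: A -> exists v, [/\ v \in I, N v :\: A = [set b] &
      exists a, A :\: N v = [set a]].
  move=> b; rewrite inE => /andP [bA bK].
  have [v vI bv] := Hc1 b bK.
  have nvA : N v != A by apply: contraNneq bA => <-.
  have [[b' hb] ha] := split2 v vI nvA.
  have : b \in N v :\: A by rewrite inE bA bv.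
  by rewrite hb inE => /eqP E; exists v; rewrite E; split.
have [v1 [v1I hb1 [a ha]]] := getv b1 b1KA.
have [v2 [v2I hb2 [a' ha']]] := getv b2 b2KA.
have aa' : a = a'.
  by apply: (swap_same hb1 ha hb2 ha' _ (diffN_le1 v1I v2I)); rewrite eq_sym.
have [a2 [a2A a2a]] : exists a2, a2 \in A /\ a2 != a.
  by case: (eqVneq x a) => [E|]; [exists y; rewrite -E eq_sym | exists x].
have [w wI a2w] := Hc2 a2 (AK a2 a2A).
have nwA : N w != A by apply: contraNneq a2w => ->.
have [[b hb] [c hc]] := split2 w wI nwA.
have ca2 : a2 = c by apply/set1P; rewrite -hc inE a2w.
case: (eqVneq b b1) => [Eb|nb].
  have : a' = c.
    by apply: (swap_same hb2 ha' hb hc _ (diffN_le1 v2I wI)); rewrite Eb.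
  by rewrite -aa' -ca2 => E; rewrite E eqxx in a2a.
have : a = c by apply: (swap_same hb1 ha hb hc nb (diffN_le1 v1I wI)).
by rewrite -ca2 => E; rewrite E eqxx in a2a.
Qed.

Ltac ndone := try done; rewrite inE; first [assumption | rewrite Hsym; assumption].

Lemma act_props z : active_vertex e z ->
  (z \in K -> (exists2 u, u \in I & z \in N u) /\ (exists2 u, u \in I & z \notin N u)) /\
  (z \in I -> exists x, x \in N z).
Proof.
case=> a [b [c [d [/and5P [Hu ab cd ac bd] hz]]]].
have nac : a != c by apply/eqP=> E; move: Hu; rewrite E /= !inE !eqxx /= !orbT.
have nbd : b != d by apply/eqP=> E; move: Hu; rewrite E /= !inE !eqxx /= !orbT andbF.
have Nin : forall u x, (x \in N u) = e u x by move=> u x; rewrite inE.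
move: hz; rewrite !inE => /or4P [] /eqP ->.
- case/orP: (KorI a) => aK.
  + have cI : c \in I by case/orP: (KorI c) => // cK; move: (HK aK cK nac); rewrite (negbTE ac).
    have dK : d \in K by case/orP: (KorI d) => // dI; move: (HI cI dI); rewrite cd.
    have bI : b \in I by case/orP: (KorI b) => // bK; move: (HK bK dK nbd); rewrite (negbTE bd).
    split => [_|aI]; last by case: (notKI aK aI).
    by split; [exists b; solve [ndone] | exists c; solve [ndone]].
  + split => [aK'|_]; first by case: (notKI aK' aK).
    by exists b; solve [ndone].
- case/orP: (KorI a) => aK.
  + have cI : c \in I by case/orP: (KorI c) => // cK; move: (HK aK cK nac); rewrite (negbTE ac).
    have dK : d \in K by case/orP: (KorI d) => // dI; move: (HI cI dI); rewrite cd.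
    have bI : b \in I by case/orP: (KorI b) => // bK; move: (HK bK dK nbd); rewrite (negbTE bd).
    split => [bK|_]; first by case: (notKI bK bI).
    by exists a; solve [ndone].
  + have bK : b \in K by case/orP: (KorI b) => // bI; move: (HI aK bI); rewrite ab.
    have dI : d \in I by case/orP: (KorI d) => // dK; move: (HK bK dK nbd); rewrite (negbTE bd).
    split => [_|bI]; last by case: (notKI bK bI).
    by split; [exists a; solve [ndone] | exists d; solve [ndone]].
- case/orP: (KorI a) => aK.
  + have cI : c \in I by case/orP: (KorI c) => // cK; move: (HK aK cK nac); rewrite (negbTE ac).
    have dK : d \in K by case/orP: (KorI d) => // dI; move: (HI cI dI); rewrite cd.
    split => [cK|_]; first by case: (notKI cK cI).
    by exists d; solve [ndone].
  + have bK : b \in K by case/orP: (KorI b) => // bI; move: (HI aK bI); rewrite ab.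
    have dI : d \in I by case/orP: (KorI d) => // dK; move: (HK bK dK nbd); rewrite (negbTE bd).
    have cK : c \in K by case/orP: (KorI c) => // cI; move: (HI cI dI); rewrite cd.
    split => [_|cI]; last by case: (notKI cK cI).
    by split; [exists d; solve [ndone] | exists a; solve [ndone]].
- case/orP: (KorI a) => aK.
  + have cI : c \in I by case/orP: (KorI c) => // cK; move: (HK aK cK nac); rewrite (negbTE ac).
    have dK : d \in K by case/orP: (KorI d) => // dI; move: (HI cI dI); rewrite cd.
    have bI : b \in I by case/orP: (KorI b) => // bK; move: (HK bK dK nbd); rewrite (negbTE bd).
    split => [_|dI]; last by case: (notKI dK dI).
    by split; [exists c; solve [ndone] | exists b; solve [ndone]].
  + have bK : b \in K by case/orP: (KorI b) => // bI; move: (HI aK bI); rewrite ab.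
    have dI : d \in I by case/orP: (KorI d) => // dK; move: (HK bK dK nbd); rewrite (negbTE bd).
    split => [dK|_]; first by case: (notKI dK dI).
    by exists c; solve [ndone].
Qed.

Hypothesis Hact : active_graph e.

Lemma main_sec :
  let P1 := phi_complete e I /\ #|K| = #|I| in
  let P2 := [/\ #|K| = phi_omega e I, #|K| < #|I|,
               (forall v, v \in I -> exists C, phi_max_clique e I C /\ v \in C) &
               (forall v, v \in I -> #|K| <= 1 + phi_deg e I v)] in
  (P1 /\ ~ P2) \/ (~ P1 /\ P2).
Proof.
have Hc1 : forall x, x \in K -> exists2 u, u \in I & x \in N u.
  by move=> x xK; have [/(_ xK) [] ] := act_props (Hact x).
have Hc2 : forall x, x \in K -> exists2 u, u \in I & x \notin N u.
  by move=> x xK; have [/(_ xK) [] ] := act_props (Hact x).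
have Hnb : forall u, u \in I -> exists x, x \in N u.
  by move=> u uI; have [_ /(_ uI)] := act_props (Hact u).
case: (set_0Vmem I) => [I0 | [u0 u0I]].
  apply: (final (g := id)) => [u v|u|x]; rewrite ?I0 ?inE //.
  by move=> /Hc1 [w]; rewrite I0 inE.
have J := johnson Hc1 Hc2 Hnb u0I.
pose M u := if #|N u0| == 1 then N u else K :\: N u.
have NKM : forall u, u \in I -> #|N u0| != 1 -> N u = K :\: M u.
  move=> u uI h; rewrite /M (negbTE h) setDDr setDv set0U.
  by apply/esym/setIidPr; apply: N_subK.
have M1 : forall u, u \in I -> #|M u| = 1.
  move=> u uI; rewrite /M; case: ifP => h.
    by rewrite (eqcard uI u0I); apply/eqP.
  case: J => [J|J]; first by rewrite J eqxx in h.
  rewrite -J !cardsD (setIidPr (N_subK uI)) (setIidPr (N_subK u0I)).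
  by rewrite (eqcard uI u0I).
have MK : forall u, u \in I -> M u \subset K.
  move=> u uI; rewrite /M; case: ifP => _; [exact: N_subK | exact: subsetDl].
have Minj : forall u v, u \in I -> v \in I -> M u = M v -> N u = N v.
  move=> u v uI vI E; have [h|h] := eqVneq #|N u0| 1.
    by move: E; rewrite /M h eqxx.
  by rewrite (NKM u uI h) (NKM v vI h) E.
have Mcov : forall x, x \in K -> exists2 u, u \in I & x \in M u.
  move=> x xK; have [h|h] := eqVneq #|N u0| 1.
    by have [u uI xu] := Hc1 x xK; exists u; rewrite // /M h eqxx.
  by have [u uI xu] := Hc2 x xK; exists u; rewrite // /M (negbTE h) inE xu xK.
pose g u := odflt u [pick y in M u].
have gM : forall u, u \in I -> M u = [set g u].
  move=> u uI; have /eqP/cards1P [y hy] := M1 u uI.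
  rewrite /g; case: pickP => [y'|] /=.
    by rewrite hy inE => /eqP ->.
  by move=> /(_ y); rewrite hy inE eqxx.
apply: (final (g := g)).
- move=> u v uI vI; rewrite /phi_adj uI vI /=.
  have [E|nE] := eqVneq (N u) (N v).
    have -> : g u = g v.
      have EM : M u = M v by rewrite /M E.
      by apply/set1P; rewrite -(gM v vI) -EM (gM u uI) inE.
    rewrite eqxx; apply/negbTE/negP => /andP [uv sp].
    by have [x [y [hx _]]] := sig_inv uI vI uv sp; rewrite E setDv inE in hx.
  have uv : u != v by apply: contraNneq nE => ->.
  rewrite uv (neq_sig uI vI nE) /=; apply/esym; apply: (contraNneq _ nE) => E; apply/eqP.
  by apply: Minj => //; rewrite (gM u uI) (gM v vI) E.
- move=> u uI; apply: (subsetP (MK u uI)); by rewrite gM // set11.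
- move=> x xK; have [u uI xu] := Mcov x xK; exists u => //.
  by move: xu; rewrite gM // inE => /eqP.
Qed.
End Main.

Theorem theorem5p2 (T : finType) (e : rel T) (K I : {set T}) :
  simple_graph e -> split_bipartition e K I -> active_graph e ->
  phi_simple e I -> phi_connected e I ->
  let P1 := phi_complete e I /\ #|K| = #|I| in
  let P2 := [/\ #|K| = phi_omega e I, #|K| < #|I|,
               (forall v, v \in I -> exists C, phi_max_clique e I C /\ v \in C) &
               (forall v, v \in I -> #|K| <= 1 + phi_deg e I v)] in
  (P1 /\ ~ P2) \/ (~ P1 /\ P2).
Proof.
move=> [Hsym Hirr] [HKI0 HKIT HK HI] Hact Hsimp Hconn.
exact: main_sec.
Qed.
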